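(* Let $U=U_kV_k\cdots U_1V_1U_0$, where the $U_i$ are incoherent unitaries and the $V_i$ are (generalised controlled) Hadamards, acting on $n\ge k$ qubits. Then the induced trace distance between the unitary channel of $U$ and that of $H^{\otimes n}$ satisfies $\mathcal{D}(U,H^{\otimes n})\ge\sqrt{1-2^{k-n}}$.
   Context: A unitary is incoherent if it has the form $\sum_x e^{i\theta_x}|\pi(x)\rangle\langle x|$ for real $\theta_x$ and a permutation $\pi$. A generalised controlled Hadamard is $\sum_{x\in S}|x\rangle\langle x|\otimes H+\sum_{y\in S^c}|y\rangle\langle y|\otimes I$. The induced trace distance between channels is $\mathcal{D}(\mathcal{E},\mathcal{V})=\max_\rho \tfrac12\|\mathcal{E}(\rho)-\mathcal{V}(\rho)\|_1$; for unitary channels this equals $\max_{|\psi\rangle}\sqrt{1-|\langle\psi|U^\dagger V|\psi\rangle|^2}$. *)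

(* Defs.v *)
From mathcomp Require Import all_boot all_order all_algebra all_fingroup.
From mathcomp Require Import all_classical all_reals all_analysis.
From mathcomp Require Export complex.

Set Implicit Arguments.
Unset Strict Implicit.
Unset Printing Implicit Defensive.

Import Order.TTheory GRing.Theory Num.Theory.
Local Open Scope ring_scope.
Local Open Scope complex_scope.

(* Computational basis of n qubits: 'I_(2^n); qubit j of basis state x is
   the j-th binary digit of x. *)
Definition bit (j x : nat) : bool := odd (x %/ 2 ^ j).

Definition expi (R : realType) (t : R) : R[i] := cos t +i* sin t.

Definition adj (R : realType) m n (A : 'M[R[i]]_(m, n)) : 'M[R[i]]_(n, m) :=
  (map_mx (@conjc R) A)^T.

Definition incoherent (R : realType) (n : nat) (U : 'M[R[i]]_(2 ^ n)) : Prop :=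
  exists (p : {perm 'I_(2 ^ n)}) (th : 'I_(2 ^ n) -> R),
    U = \matrix_(x, y) (if x == p y then expi (th y) else 0).

Definition hadamard_entry (R : realType) (a b : bool) : R[i] :=
  (((-1) ^+ (a && b) / Num.sqrt (2 : R)) : R)%:C.

(* Generalised controlled Hadamard with target qubit t and control set S:
   sum_{c in S} |c><c| (x) H_t + sum_{c notin S} |c><c| (x) I_t, where the
   control value c of a basis state x is x with its t-th bit cleared
   (encoded as a natural number).  S = everything gives a plain Hadamard
   on qubit t. *)
Definition gen_ctrl_hadamard (R : realType) (n : nat) (V : 'M[R[i]]_(2 ^ n))
  : Prop :=
  exists (t : 'I_n) (S : pred nat),
    V = \matrix_(x, y)
          (if [forall j : 'I_n, (j != t) ==> (bit j x == bit j y)] then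
             (if S (x - bit t x * 2 ^ t)%N
              then hadamard_entry R (bit t x) (bit t y)
              else (bit t x == bit t y)%:R)
           else 0).

Definition hadamard_n (R : realType) (n : nat) : 'M[R[i]]_(2 ^ n) :=
  \matrix_(x, y)
    ((((-1) ^+ (\sum_(j < n) (bit j x && bit j y))%N
        / Num.sqrt ((2 ^ n)%:R : R)) : R)%:C).

(* U = U_k V_k ... U_1 V_1 U_0, given U_0 and the list
   [:: (V_1, U_1); ...; (V_k, U_k)]. *)
Definition circuit (R : realType) (n : nat) (U0 : 'M[R[i]]_(2 ^ n))
  (ps : seq ('M[R[i]]_(2 ^ n) * 'M[R[i]]_(2 ^ n))) : 'M[R[i]]_(2 ^ n) :=
  foldl (fun acc p => p.2 *m p.1 *m acc) U0 ps.

(* Induced trace distance between the unitary channels of U and V, via the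
   formula  D = max_{|psi>} sqrt(1 - |<psi|U^dag V|psi>|^2)  (unit psi). *)
Definition chan_dist (R : realType) (n : nat) (U V : 'M[R[i]]_(2 ^ n)) : R :=
  sup [set d : R | exists psi : 'cV[R[i]]_(2 ^ n),
         (adj psi *m psi) 0 0 = 1 /\
         d = Num.sqrt (1 - Normc.normc ((adj psi *m (adj U *m V) *m psi) 0 0)
                           ^+ 2)].

(* Main.v *)
Require Import Defs.
From mathcomp Require Import all_boot all_order all_algebra all_fingroup.
From mathcomp Require Import all_classical all_reals all_analysis.
From mathcomp Require Import complex.

Import Order.TTheory GRing.Theory Num.Theory.

Lemma bitS j x : bit j.+1 x = bit j x./2.
Proof. by rewrite /bit expnS divnMA divn2. Qed.

Lemma bin_exp n x : (x < 2 ^ n)%N -> x = (\sum_(j < n) bit j x * 2 ^ j)%N.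
Proof.
elim: n x => [|n IH] x hx.
  by rewrite big_ord0; move: hx; rewrite expn0; case: x.
rewrite big_ord_recl /= /bit expn0 divn1 muln1.
have hx2 : (x./2 < 2 ^ n)%N by rewrite -divn2 ltn_divLR // -expnSr.
rewrite [X in (X = _)](divn_eq x 2) addnC modn2 divn2 (IH _ hx2) big_distrl /=.
have E : forall j : 'I_n, bit j x./2 * 2 ^ j * 2 = odd (x %/ 2 ^ bump 0 j) * 2 ^ bump 0 j.
  by move=> j; rewrite /bump /= add1n -/(bit j.+1 x) bitS expnS -mulnA (mulnC (2 ^ j)).
by rewrite (eq_bigr _ (fun j _ => E j)).
Qed.
Arguments bin_exp {n x}.

Lemma bits_inj n x y : (x < 2 ^ n)%N -> (y < 2 ^ n)%N ->
  (forall j, (j < n)%N -> bit j x = bit j y) -> x = y.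
Proof.
move=> hx hy h; rewrite (bin_exp hx) (bin_exp hy).
by apply: eq_bigr => j _; rewrite h.
Qed.

Lemma ctrl_val n (t : 'I_n) x : (x < 2 ^ n)%N ->
  (x - bit t x * 2 ^ t)%N = (\sum_(j < n | j != t) bit j x * 2 ^ j)%N.
Proof.
by move=> hx; rewrite {1}(bin_exp hx) (bigD1 t) //= addKn.
Qed.

Local Open Scope ring_scope.
Local Open Scope complex_scope.

Section S.
Variable R : realType.

Lemma normCR (x : R) : `|x%:C| = (`|x|)%:C.
Proof. by rewrite normc_def /= expr0n /= addr0 sqrtr_sqr. Qed.

Lemma normc_eq (z : R[i]) : `|z| = (Normc.normc z)%:C.
Proof. by case: z => a b; rewrite normc_def. Qed.

Lemma norm_conjc (z : R[i]) : `|z^*| = `|z|.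
Proof. by case: z => a b; rewrite !normc_def /= sqrrN. Qed.

Lemma norm_expi (t : R) : `|expi t| = 1.
Proof. by rewrite normc_def /= cos2Dsin2 sqrtr1. Qed.

Definition colb {m n} (A : 'M[R[i]]_(m, n)) (c : R[i]) :=
  forall j, \sum_i `|A i j| <= c.

Lemma colb_mul m n p (A : 'M[R[i]]_(m, n)) (B : 'M[R[i]]_(n, p)) a b :
  0 <= a -> colb A a -> colb B b -> colb (A *m B) (a * b).
Proof.
move=> a0 hA hB j.
apply: (@le_trans _ _ (\sum_i \sum_k `|A i k| * `|B k j|)).
  apply: ler_sum => i _; rewrite mxE.
  apply: le_trans (ler_norm_sum _ _ _) _.
  by apply: ler_sum => k _; rewrite normrM.
rewrite exchange_big /=.
apply: (@le_trans _ _ (\sum_k a * `|B k j|)).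
  apply: ler_sum => k _; rewrite -mulr_suml.
  by apply: ler_wpM2r => //; apply: hA.
by rewrite -mulr_sumr; apply: ler_wpM2l => //; apply: hB.
Qed.

Lemma colb_incoh n (U : 'M[R[i]]_(2 ^ n)) : incoherent U -> colb U 1.
Proof.
case=> p [th ->] j.
rewrite (bigD1 (p j)) //= big1 ?addr0; first by rewrite mxE eqxx norm_expi.
by move=> i /negbTE hi; rewrite mxE hi normr0.
Qed.


Lemma norm_had a b : `|hadamard_entry R a b| = ((Num.sqrt (2:R))^-1)%:C.
Proof.
rewrite /hadamard_entry normCR normrM normrX normrN1 expr1n mul1r.
by rewrite normfV ger0_norm // sqrtr_ge0.
Qed.

Lemma colb_gch n (V : 'M[R[i]]_(2 ^ n)) :
  gen_ctrl_hadamard V -> colb V (Num.sqrt (2:R))%:C.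
Proof.
case=> t [S ->] y.
set A := [pred x : 'I_(2^n) | [forall j : 'I_n, (j != t) ==> (bit j x == bit j y)]].
have agreeP : forall x : 'I_(2^n), x \in A -> forall j : 'I_n, j != t -> bit j x = bit j y.
  by move=> x /forallP h j jt; exact: (eqP (implyP (h j) jt)).
have K1 : forall x : 'I_(2^n), x \in A ->
    (x - bit t x * 2 ^ t)%N = (y - bit t y * 2 ^ t)%N.
  move=> x hx; rewrite !ctrl_val //; apply: eq_bigr => j jt.
  by rewrite (agreeP x hx j jt).
have K3 : forall x x' : 'I_(2^n), x \in A -> x' \in A -> bit t x = bit t x' -> x = x'.
  move=> x x' hx hx' e; apply: val_inj; apply: (@bits_inj n); [exact: ltn_ord|exact: ltn_ord|move=> j jn].
  case: (eqVneq j t) => [->|ne] //.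
  by rewrite (agreeP x hx (Ordinal jn) ne) (agreeP x' hx' (Ordinal jn) ne).
have yA : y \in A by apply/forallP => j; apply/implyP.
set s := Num.sqrt (2:R).
have s0 : 0 < s by rewrite sqrtr_gt0.
case hS: (S (y - bit t y * 2 ^ t)%N).
  apply: (@le_trans _ _ (\sum_x (if x \in A then (s^-1)%:C else 0))).
    apply: ler_sum => x _; rewrite mxE.
    have -> : [forall j : 'I_n, (j != t) ==> (bit j x == bit j y)] = (x \in A) by [].
    case hx: (x \in A); last by rewrite normr0.
    by rewrite (K1 x hx) hS norm_had.
  rewrite -big_mkcond sumr_const.
  have cA : (#|A| <= 2)%N.
    rewrite -(card_in_imset (f := fun x : 'I_(2^n) => bit t x)).
      by apply: leq_trans (max_card _) _; rewrite card_bool.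
    by move=> x x' hx hx' e; apply: K3.
  rewrite -rmorphMn lecR.
  apply: (@le_trans _ _ (s^-1 *+ 2)).
    rewrite -!(mulr_natr (s^-1)); apply: ler_wpM2l; first by rewrite invr_ge0 ltW.
    by rewrite ler_nat.
  rewrite -mulr_natr -[X in _ * X](sqr_sqrtr (ler0n R 2)) -/s expr2 mulKf //.
  by rewrite gt_eqF.
apply: (@le_trans _ _ (\sum_x ((x == y)%:R : R[i]))).
  apply: ler_sum => x _; rewrite mxE.
  have -> : [forall j : 'I_n, (j != t) ==> (bit j x == bit j y)] = (x \in A) by [].
  case hx: (x \in A); last by rewrite normr0; case: (x == y).
  rewrite (K1 x hx) hS.
  case: eqP => e; last by rewrite normr0; case: (x == y).
  by rewrite (K3 x y hx yA e) eqxx normr1.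
rewrite (bigD1 y) //= big1 ?eqxx ?addr0; last by move=> x /negbTE ->.
by rewrite lecR -sqrtr1 ler_sqrt // ler1n.
Qed.


Lemma colb_circuit n (ps : seq ('M[R[i]]_(2 ^ n) * 'M[R[i]]_(2 ^ n))) :
  (forall p, p \in ps -> gen_ctrl_hadamard p.1 /\ incoherent p.2) ->
  forall U0 c, 0 <= c -> colb U0 c ->
  colb (circuit U0 ps) ((Num.sqrt (2:R))%:C ^+ size ps * c).
Proof.
elim: ps => [|p ps IH] hps U0 c c0 hU0.
  by rewrite expr0 mul1r.
have [h1 h2] := hps p (mem_head _ _).
have s0 : 0 <= (Num.sqrt (2:R))%:C by rewrite ler0c sqrtr_ge0.
have hP : colb (p.2 *m p.1) (1 * (Num.sqrt (2:R))%:C).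
  by apply: colb_mul => //; [exact: colb_incoh | exact: colb_gch].
have := IH (fun q hq => hps q (@mem_behead _ (p :: ps) q hq)) (p.2 *m p.1 *m U0)
  (1 * (Num.sqrt (2:R))%:C * c).
rewrite /circuit /= mul1r exprS (mulrC _ (_ ^+ _)) -mulrA.
apply; first by rewrite mulr_ge0.
by rewrite -[X in colb _ X]mul1r mulrA; apply: colb_mul => //; rewrite mul1r.
Qed.

End S.


Theorem lemma4 (R : realType) (n : nat) (U0 : 'M[R[i]]_(2 ^ n))
  (ps : seq ('M[R[i]]_(2 ^ n) * 'M[R[i]]_(2 ^ n))) :
  (size ps <= n)%N ->
  incoherent U0 ->
  (forall p, p \in ps -> gen_ctrl_hadamard p.1 /\ incoherent p.2) ->
  Num.sqrt (1 - (2 : R) ^- (n - size ps)) <=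
    chan_dist (circuit U0 ps) (hadamard_n R n).
Proof.
move=> hk hU hps.
set k := size ps.
set s := Num.sqrt (2:R).
have hcol : @colb R _ _ (circuit U0 ps) (s%:C ^+ k).
  by rewrite -[X in colb _ _ X]mulr1; apply: colb_circuit => //; exact: colb_incoh.
have h0 : (0 < 2 ^ n)%N by rewrite expn_gt0.
set i0 : 'I_(2 ^ n) := Ordinal h0.
set psi : 'cV[R[i]]_(2 ^ n) := delta_mx i0 0.
have adjpsi : adj psi = delta_mx 0 i0.
  by apply/matrixP => a b; rewrite !mxE conjc_nat andbC.
have quad M : (adj psi *m M *m psi) 0 0 = M i0 i0.
  by rewrite adjpsi -rowE -colE !mxE.
set U := circuit U0 ps.
set Hn := hadamard_n R n.
set q := (adj U *m Hn) i0 i0.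
set r := (Num.sqrt ((2 ^ n)%:R : R))^-1.
have psin : (adj psi *m psi) 0 0 = 1.
  by rewrite -[adj psi]mulmx1 quad mxE eqxx mulr1n.
have hH : forall j, `|Hn j i0| = r%:C.
  move=> j; rewrite mxE normCR normrM normrX normrN1 expr1n mul1r.
  by rewrite normfV ger0_norm // sqrtr_ge0.
have hq : `|q| <= (s ^+ k * r)%:C.
  rewrite /q mxE.
  apply: le_trans (ler_norm_sum _ _ _) _.
  under eq_bigr => j _ do rewrite mxE normrM hH mxE norm_conjc.
  rewrite -mulr_suml rmorphM rmorphXn /=.
  apply: ler_wpM2r; first by rewrite ler0c invr_ge0 sqrtr_ge0.
  exact: hcol.
have nq0 : 0 <= Normc.normc q by rewrite -ler0c -normc_eq normr_ge0.
have hq' : Normc.normc q <= s ^+ k * r by rewrite -lecR -normc_eq.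
have r0 : 0 <= r by rewrite invr_ge0 sqrtr_ge0.
have s0 : 0 <= s by rewrite sqrtr_ge0.
have hq2 : Normc.normc q ^+ 2 <= 2 ^- (n - k).
  apply: (@le_trans _ _ ((s ^+ k * r) ^+ 2)).
    by rewrite !expr2; apply: ler_pM.
  rewrite exprMn exprVn sqr_sqrtr ?ler0n // -exprM mulnC exprM sqr_sqrtr ?ler0n //.
  rewrite natrX (_ : (2:R) ^+ n = 2 ^+ (n - k) * 2 ^+ k); last by rewrite -exprD subnK.
  by rewrite invfM mulrCA mulfV ?mulr1 // expf_neq0 // pnatr_eq0.
rewrite /chan_dist; set E := (X in sup X).
have hE : E (Num.sqrt (1 - Normc.normc q ^+ 2)).
  by exists psi; split => //; rewrite quad.
have hub : has_ubound E.
  exists 1 => x [phi [_ ->]].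
  apply: (@le_trans _ _ (Num.sqrt 1)); last by rewrite sqrtr1.
  by apply: ler_wsqrtr; rewrite gerBl sqr_ge0.
apply: le_trans (ub_le_sup hub hE).
by apply: ler_wsqrtr; apply: lerB.
Qed.
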